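(* In the setting described in the context, suppose $(g\circ h^a)_\sharp\mu=\mu$ for some $a>0$, and that $\int F\,d\mu$ is finite and nonzero. Then the structure functions have power-law scaling $S_p(k_n)\propto k_n^{-\zeta_p}$ (i.e. $S_p(k_n)=c\,k_n^{-\zeta_p}$ with a constant $c\neq0$ independent of $n$) with exponent $$\zeta_p=(1-\log_2a)\,p.$$
   Context: Let $(\mathcal{X},\Sigma)$ be a measurable space, $\Phi^t$ a flow on $\mathcal{X}$ (bijective measurable maps, $\Phi^{t_1}\circ\Phi^{t_2}=\Phi^{t_1+t_2}$, jointly measurable), $f_\sharp$ push-forward, and $\mu$ a probability measure with $\Phi^t_\sharp\mu=\mu$ for all $t$. Let $h^a$, $a>0$, be bijective measurable maps of $\mathcal{X}$ and $\mathcal{G}$ a group of bijective measurable maps with $h^{a_1}\circ h^{a_2}=h^{a_1a_2}$, $\Phi^t\circ g=g\circ\Phi^t$, $g\circ h^a=h^a\circ g$, $\Phi^t\circ h^a=h^a\circ\Phi^{t/a}$. Fix $g\in\mathcal{G}$ and $p\in\mathbb{R}$, and a measurable $F:\mathcal{X}\to\mathbb{R}$ with $F\circ h^a=F/a^p$ for all $a>0$. For integers $n\ge0$ let $k_n=2^n$ and define the generalized structure function $S_p(k_n)=k_n^{-p}\int F\circ g^n\,d\mu$. *)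

(* Defs.v *)
From HB Require Import structures.
From mathcomp Require Import all_boot all_order all_algebra.
From mathcomp Require Import all_classical all_reals all_analysis.
Set Implicit Arguments. Unset Strict Implicit. Unset Printing Implicit Defensive.
Import Order.TTheory GRing.Theory Num.Theory.
Local Open Scope classical_set_scope.
Local Open Scope ring_scope.

Definition bimeas d (T : measurableType d) (f : T -> T) : Prop :=
  bijective f /\ measurable_fun setT f.

Definition is_flow d (T : measurableType d) (R : realType) (Phi : R -> T -> T) : Prop :=
  (forall t, bimeas (Phi t)) /\
  (forall t1 t2, Phi t1 \o Phi t2 = Phi (t1 + t2)) /\
  measurable_fun setT (fun q : R * T => Phi q.1 q.2).

Definition pushforward_eq d (T : measurableType d) (R : realType)
  (mu : set T -> \bar R) (f : T -> T) : Prop :=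
  forall A, measurable A -> pushforward mu f A = mu A.

Definition is_map_group d (T : measurableType d) (G : set (T -> T)) : Prop :=
  G id /\
  (forall g1 g2, G g1 -> G g2 -> G (g1 \o g2)) /\
  (forall g, G g -> bimeas g /\ exists g', G g' /\ cancel g g' /\ cancel g' g).

Definition scaling_setting d (T : measurableType d) (R : realType)
  (mu : probability T R) (Phi : R -> T -> T) (h : R -> T -> T)
  (G : set (T -> T)) : Prop :=
  is_flow Phi /\
  (forall t, pushforward_eq mu (Phi t)) /\
  (forall a, 0 < a -> bimeas (h a)) /\
  is_map_group G /\
  (forall a1 a2, 0 < a1 -> 0 < a2 -> h a1 \o h a2 = h (a1 * a2)) /\
  (forall t g, G g -> Phi t \o g = g \o Phi t) /\
  (forall g a, G g -> 0 < a -> g \o h a = h a \o g) /\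
  (forall t a, 0 < a -> Phi t \o h a = h a \o Phi (t / a)).

Definition kn (R : realType) (n : nat) : R := 2 ^+ n.

Definition Sp d (T : measurableType d) (R : realType) (mu : probability T R)
  (F : T -> R) (g : T -> T) (p : R) (n : nat) : \bar R :=
  ((kn R n) `^ (- p))%:E * \int[mu]_x (F (iter n g x))%:E.

Definition log2 (R : realType) (a : R) : R := ln a / ln 2.

(* Main.v *)
Require Import Defs.
From HB Require Import structures.
From mathcomp Require Import all_boot all_order all_algebra.
From mathcomp Require Import all_classical all_reals all_analysis measurable_realfun.
From mathcomp Require Import ring.
Import Order.TTheory GRing.Theory Num.Theory.
Local Open Scope classical_set_scope.
Local Open Scope ring_scope.

Lemma pmuleDr (R : realType) (k : R) (x y : \bar R) : 0 < k ->
  (k%:E * (x + y) = k%:E * x + k%:E * y)%E.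
Proof.
move=> k0; have k0' : (0 < k%:E)%E by rewrite lte_fin.
case: x => [x| |]; case: y => [y| |].
all: rewrite /= ?gt0_muley ?gt0_muleNy //.
by rewrite -EFinD -!EFinM mulrDr.
Qed.
Section H.
Local Open Scope ereal_scope.
Lemma inv_int d (T : measurableType d) (R : realType) (mu : probability T R)
  (psi : T -> T) : measurable_fun setT psi -> pushforward_eq mu psi ->
  forall H : T -> R, measurable_fun setT H ->
  (\int[mu]_x (H (psi x))%:E = \int[mu]_x (H x)%:E)%E.
Proof.
move=> mpsi inv H mH.
have key : forall f : T -> \bar R, measurable_fun setT f -> (forall x, 0 <= f x)%E ->
   (\int[mu]_x f (psi x) = \int[mu]_x f x)%E.
  move=> f mf f0.
  have := @ge0_integral_pushforward _ _ _ _ R psi mpsi mu setT f measurableT mf (fun y _ => f0 y).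
  rewrite preimage_setT => <-.
  apply: eq_measure_integral => A mA _; exact: inv.
have mE : measurable_fun setT (fun x => (H x)%:E) by exact: measurableT_comp.
rewrite integralE [in RHS]integralE.
rewrite -(key (fun x => (H x)%:E)^\+) -?(key (fun x => (H x)%:E)^\-) //.
all: try done.
all: try exact: measurable_funeneg.
all: try exact: measurable_funepos.
all: try (move=> x; exact: funeneg_ge0).
all: try (move=> x; exact: funepos_ge0).
by congr (_ - _); apply: eq_integral => x _; rewrite ?funeposE ?funenegE.
Qed.

Lemma pint_scale d (T : measurableType d) (R : realType) (mu : probability T R)
  (k : R) (H : T -> R) : measurable_fun setT H -> (0 < k)%R ->
  (\int[mu]_x (k * H x)%R%:E = k%:E * \int[mu]_x (H x)%:E)%E.
Proof.
move=> mH k0.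
under eq_integral do rewrite EFinM.
rewrite [in RHS]integralE integralE ge0_funeposM ?ge0_funenegM ?ltW //.
have mE : measurable_fun setT (fun x => (H x)%:E) by exact: measurableT_comp.
rewrite !ge0_integralZl_EFin ?ltW //.
- by rewrite -muleN -pmuleDr.
all: try exact: measurable_funeneg.
all: try exact: measurable_funepos.
all: try (move=> x _; exact: funeneg_ge0).
all: try (move=> x _; exact: funepos_ge0).
Qed.

End H.

Theorem proposition5 (d : measure_display) (T : measurableType d) (R : realType)
  (mu : probability T R) (Phi : R -> T -> T) (h : R -> T -> T)
  (G : set (T -> T)) (g : T -> T) (p : R) (F : T -> R) :
  scaling_setting mu Phi h G ->
  G g ->
  measurable_fun setT F ->
  (forall a, 0 < a -> F \o h a = (fun x => F x / a `^ p)) ->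
  forall a, 0 < a ->
  pushforward_eq mu (g \o h a) ->
  (\int[mu]_x (F x)%:E \is a fin_num)%E ->
  (\int[mu]_x (F x)%:E != 0)%E ->
  exists c : R, c != 0 /\
    forall n : nat, Sp mu F g p n = (c * (kn R n) `^ (- ((1 - log2 a) * p)))%:E.
Proof.
move=> [flow [muinv [hb [grp [hcomp [Pg [gh Ph]]]]]]] Gg mF hF a a0 inv Ifin I0.
have ai0 : 0 < a^-1 by rewrite invr_gt0.
have h1 : forall x, h 1 x = x.
  move=> x; have := hcomp 1 1 ltr01 ltr01; rewrite mulr1 => E.
  have [[hinv hK _] _] := hb 1 ltr01.
  have := congr1 (fun f => f x) E => /= /(congr1 hinv).
  by rewrite !hK.
have hK1 : forall x, h a^-1 (h a x) = x.
  move=> x; have := hcomp _ _ ai0 a0; rewrite mulVf ?gt_eqF // => E.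
  by have := congr1 (fun f => f x) E => /= ->.
have [[_ mg] _] := (grp.2.2 g Gg).
have [_ mha] := hb a a0.
have mpsi : measurable_fun setT (g \o h a) by exact: measurableT_comp.
have gpsi : forall x, g x = h a^-1 ((g \o h a) x).
  move=> x /=; have := congr1 (fun f => f (h a x)) (gh g _ Gg ai0) => /= <-.
  by rewrite hK1.
have itc : forall n x, iter n g (h a^-1 x) = h a^-1 (iter n g x).
  elim=> [//|n IH] x /=; rewrite IH.
  by have := congr1 (fun f => f (iter n g x)) (gh g _ Gg ai0).
have mit : forall n, measurable_fun setT (iter n g).
  elim=> [|n IH] /=; first exact: measurable_id.
  exact: (measurableT_comp mg IH).
have Fh : forall x, F (h a^-1 x) = a `^ p * F x.
  move=> x; have := congr1 (fun f => f x) (hF _ ai0) => /= ->.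
  have e : a^-1 `^ p = (a `^ p)^-1 by rewrite -[a^-1]powR_inv1 ?ltW // -powRrM mulN1r powRN.
  by rewrite e invrK mulrC.
have step : forall n, (\int[mu]_x (F (iter n.+1 g x))%:E =
     (a `^ p)%:E * \int[mu]_x (F (iter n g x))%:E)%E.
  move=> n.
  have mH : measurable_fun setT (fun x => F (iter n g x)) by exact: measurableT_comp.
  rewrite -pint_scale ?powR_gt0 //.
  rewrite -(inv_int _ _ _ _ _ mpsi inv (fun x => a `^ p * F (iter n g x))); last first.
    by apply: measurable_funM => //; exact: measurable_cst.
  apply: eq_integral => x _.
  by rewrite iterSr gpsi itc Fh.
set c := fine (\int[mu]_x (F x)%:E).
have Ic : (\int[mu]_x (F x)%:E = c%:E)%E by rewrite /c fineK.
have Jn : forall n, (\int[mu]_x (F (iter n g x))%:E = ((a `^ p) ^+ n * c)%:E)%E.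
  elim=> [|n IH]; first by rewrite expr0 mul1r -Ic.
  by rewrite step IH -EFinM exprS mulrA.
exists c; split.
  by apply: contra I0; rewrite Ic => /eqP ->.
move=> n; rewrite /Sp Jn -EFinM; congr EFin.
have l2 : 0 < ln (2 : R) by apply: ln_gt0; rewrite ltr1n.
have k0 : 0 < kn R n by rewrite /kn exprn_gt0.
rewrite /powR !gt_eqF ?exprn_gt0 ?powR_gt0 //.
rewrite /kn lnXn // -expRM_natl mulrA [_ * c]mulrC mulrA.
rewrite mulrAC -expRD mulrC; congr (c * expR _).
rewrite /log2 -mulr_natr; field.
by rewrite mul1r gt_eqF.
Qed.
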